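(* Let $G=(V,A,w)$ be a weighted weak equilibrium graph. Then the distance between any two rich leaves of $G$ is at most $2$.
   Context: A weighted directed graph $G=(V,A,w)$ has vertex set $V$, arc set $A$ and weight function $w:V\to\mathbb{Z}^+$ (positive integers). $U(G)$ is the undirected multigraph obtained by ignoring arc directions; $\operatorname{dist}(u,v)$ is the distance in $U(G)$, defined to be $|V|^2$ if $u,v$ are in different components. The cost of a vertex $u$ is $c(u)=\sum_{v\in V}w(v)\operatorname{dist}(u,v)$. $G$ is a weak equilibrium graph if for every arc $\overrightarrow{uv}\in A$ and every vertex $x$ with $\overrightarrow{ux}\notin A$ (and $x\ne u$), replacing the arc $\overrightarrow{uv}$ by $\overrightarrow{ux}$ does not decrease the cost of $u$. A leaf is a vertex of degree $1$ in $U(G)$; a rich leaf is a leaf with outdegree one (i.e. it owns its unique incident arc). *)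

(* Defs.v *)
From mathcomp Require Import all_boot.
Set Implicit Arguments. Unset Strict Implicit. Unset Printing Implicit Defensive.

(* Both u->v and v->u may be
   present, so the underlying undirected graph U(G) is a multigraph. *)

Section Graphs.
Variable V : finType.
Implicit Types (A : rel V) (u v x : V).

Definition uadj A : rel V := fun a b => A a b || A b a.

Definition walkb A (k : nat) u v : bool :=
  [exists p : k.-tuple V, path (uadj A) u p && (last u p == v)].

(* distance in U(G): length of a shortest walk (any shortest walk has length
   < |V|), and |V|^2 if u and v lie in different components *)
Definition dist A u v : nat :=
  let k := find (fun k => walkb A k u v) (iota 0 #|V|) in
  if k < #|V| then k else #|V| ^ 2.

Definition cost A (w : V -> nat) u : nat := \sum_(y : V) w y * dist A u y.

Definition swap A u v x : rel V :=
  fun a b => (A a b && ((a, b) != (u, v))) || ((a == u) && (b == x)).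

Definition weak_equilibrium A (w : V -> nat) : Prop :=
  forall u v x, A u v -> x != u -> ~~ A u x ->
    cost A w u <= cost (swap A u v x) w u.

Definition outdeg A u : nat := #|[set y | A u y]|.
Definition indeg A u : nat := #|[set y | A y u]|.
Definition deg A u : nat := outdeg A u + indeg A u.

Definition leaf A u : bool := deg A u == 1.
Definition rich_leaf A u : bool := leaf A u && (outdeg A u == 1).

End Graphs.

(* Main.v *)
Require Import Defs.
From mathcomp Require Import all_boot zify.
Set Implicit Arguments. Unset Strict Implicit.

Section L.
Variable V : finType.
Implicit Types (A : rel V).

Lemma uadjC A x y : uadj A x y = uadj A y x.
Proof. by rewrite /uadj orbC. Qed.

Lemma walkbP A k u v :
  reflect (exists s, [/\ size s = k, path (uadj A) u s & last u s = v])
          (walkb A k u v).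
Proof.
apply: (iffP existsP).
  by case=> t /andP[Hp /eqP Hl]; exists (val t); rewrite size_tuple.
case=> s [Hs Hp Hl].
have Hs' : size s == k by rewrite Hs.
by exists (Tuple Hs'); rewrite /= Hp Hl eqxx.
Qed.

Lemma dist_walk A k u v : walkb A k u v -> k < #|V| -> dist A u v <= k.
Proof.
move=> Hw Hk; rewrite /dist.
set P := fun k => walkb A k u v.
have Hhas : has P (iota 0 #|V|).
  by apply/hasP; exists k => //; rewrite mem_iota.
have := Hhas; rewrite has_find size_iota => Hf; rewrite Hf.
rewrite leqNgt; apply/negP => Hlt.
have := before_find 0 Hlt; rewrite nth_iota // => HP.
by rewrite /P Hw in HP.
Qed.

Lemma dist_max A u v : dist A u v <= #|V| ^ 2.
Proof.
rewrite /dist; case: ifP => // Hk.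
apply: leq_trans (ltnW Hk) _; rewrite expnS expn1 leq_pmulr //.
by apply: leq_ltn_trans Hk.
Qed.

Lemma dist_cases A u v :
  dist A u v = #|V| ^ 2 \/ (walkb A (dist A u v) u v /\ dist A u v < #|V|).
Proof.
rewrite /dist; case: ifP => Hk; [right|by left].
split=> //.
have : has (fun k => walkb A k u v) (iota 0 #|V|) by rewrite has_find size_iota.
move/(nth_find 0); rewrite nth_iota //.
Qed.

Lemma walkb_sym A k u v : walkb A k u v -> walkb A k v u.
Proof.
case/walkbP=> s [Hs Hp Hl]; apply/walkbP.
exists (rev (belast u s)); split.
- by rewrite size_rev size_belast.
- rewrite -Hl rev_path; apply: sub_path Hp => x y; by rewrite uadjC.
- rewrite -Hl; case: s {Hs Hp Hl} => [|x s] //=.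
  by rewrite rev_cons last_rcons.
Qed.

Lemma dist_sym A u v : dist A u v = dist A v u.
Proof.
rewrite /dist (@eq_find _ _ (fun k => walkb A k v u)) //.
by move=> k; apply/idP/idP; apply: walkb_sym.
Qed.

Lemma dist0 A u : dist A u u = 0.
Proof.
apply/eqP; rewrite -leqn0; apply: dist_walk.
  by apply/walkbP; exists [::].
by apply/card_gt0P; exists u.
Qed.


Lemma avoid A a p : (forall x, uadj A a x -> x = p) ->
  forall n s u, size s <= n -> path (uadj A) u s -> u != a -> last u s != a ->
  exists s', [/\ size s' <= size s, path (uadj A) u s', last u s' = last u s
                & a \notin s'].
Proof.
move=> Ha; elim=> [|n IH] s u.
  by rewrite leqn0 => /nilP -> _ _ _; exists [::].
case: (boolP (a \in s)) => ains; last by move=> *; exists s.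
move=> Hs Hp Hu Hl; case/splitPr: ains Hs Hp Hl => s1 s2.
case: s2 => [|x s3]; first by rewrite last_cat /= eqxx.
rewrite cat_path /= last_cat /= size_cat /= => Hs /and4P[Hp1 H1 H2 Hp3] Hl.
have Hl1 : last u s1 = p by apply: Ha; rewrite uadjC.
have Hx : x = p by apply: Ha.
have [|||s' [Hs' Hp' Hl' Ha']] := IH (s1 ++ s3) u _ _ Hu.
- rewrite size_cat; lia.
- by rewrite cat_path Hp1 Hl1 -Hx.
- by rewrite last_cat Hl1 -Hx.
exists s'; split => //.
- by apply: leq_trans Hs' _; rewrite !size_cat /=; lia.
- by rewrite Hl' last_cat Hl1 Hx.
Qed.

Lemma transfer A a p q x s : x != a -> a \notin s ->
  path (uadj A) x s -> path (uadj (swap A a p q)) x s.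
Proof.
elim: s x => [|y s IH] x //= Hx; rewrite inE negb_or => /andP[Hy Hs].
rewrite eq_sym in Hy.
case/andP=> Hxy Hp; rewrite IH // andbT.
rewrite /uadj /swap in Hxy *.
case/orP: Hxy => ->; rewrite /= ?(negbTE Hx) ?(negbTE Hy) /=.
- by rewrite xpair_eqE (negbTE Hx).
- by apply/orP; right; apply/orP; left; rewrite xpair_eqE (negbTE Hy).
Qed.

Lemma key A a p b q y : a != b -> q != a ->
  (forall x, uadj A a x -> x = p) -> (forall x, uadj A b x -> x = q) ->
  y != a -> y != b ->
  dist (swap A a p q) a y <= dist A b y.
Proof.
move=> Hab Hqa Ha Hb Hya Hyb.
case: (dist_cases A b y) => [->|[Hw Hlt]]; first exact: dist_max.
case/walkbP: Hw => s [Hs Hp Hl].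
have [||s' [Hs' Hp' Hl' Ha']] := @avoid A a p Ha _ _ _ (leqnn (size s)) Hp.
- by rewrite eq_sym.
- by rewrite Hl.
case: s' Hs' Hp' Hl' Ha' => [|x s3] Hs' Hp' Hl' Ha'.
  by move: Hyb; rewrite -Hl -Hl' /= eqxx.
move: Hp' => /= /andP[Hbx Hp3].
have Hx : x = q by apply: Hb.
subst x.
move: Ha'; rewrite inE negb_or => /andP[Haq Ha3].
apply: (@leq_trans (size (q :: s3))); last by rewrite -Hs.
apply: dist_walk; last by apply: leq_ltn_trans Hlt; rewrite -Hs.
apply/walkbP; exists (q :: s3); split=> //=.
- apply/andP; split; first by rewrite /uadj /swap !eqxx !orbT.
  by apply: transfer => //; rewrite eq_sym.
- by rewrite -Hl -Hl'.
Qed.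

Lemma pair2 A a p b q : a != b -> A b q -> 2 < #|V| ->
  dist (swap A a p q) a b <= 2.
Proof.
move=> Hab Hbq HV; apply: dist_walk HV; apply/walkbP; exists [:: q; b].
split=> //=; rewrite /uadj /swap !eqxx /= !orbT /=.
rewrite andbT; apply/orP; right; apply/orP; left; rewrite Hbq xpair_eqE eq_sym (negbTE Hab).
by [].
Qed.

Lemma leafP A a : rich_leaf A a ->
  exists p, A a p /\ (forall x, uadj A a x -> x = p).
Proof.
case/andP=> /eqP Hd /eqP Ho.
have Hi : indeg A a = 0 by move: Hd; rewrite /deg Ho; lia.
case/cards1P: (introT eqP Ho) => p Hp.
have Hi0 := cards0_eq Hi.
exists p; split.
  have : p \in [set y | A a y] by rewrite Hp set11.
  by rewrite inE.
move=> x /orP[H|H].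
  have : x \in [set y | A a y] by rewrite inE.
  by rewrite Hp inE => /eqP.
have : x \in [set y | A y a] by rewrite inE.
by rewrite Hi0 inE.
Qed.

End L.

Theorem mainTheorem20 (V : finType) (A : rel V) (w : V -> nat)
  (Hloop : forall v : V, ~~ A v v)
  (Hw : forall v : V, 0 < w v)
  (Heq : weak_equilibrium A w) :
  forall a b : V, rich_leaf A a -> rich_leaf A b -> dist A a b <= 2.
Proof.
move=> a b Ra Rb.
have [p [Hap Ha]] := leafP Ra.
have [q [Hbq Hb]] := leafP Rb.
rewrite leqNgt; apply/negP => Hgt.
have Hab : a != b by apply/eqP => E; subst b; rewrite dist0 in Hgt.
have HV1 : 1 < #|V| by apply/card_gt1P; exists a, b.
have Hdab1 : forall k, walkb A k a b -> k < #|V| -> k <= 2 -> False.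
  move=> k Hk Hk' Hk2; have := dist_walk Hk Hk'; lia.
have Hpa : p != a by apply/eqP => E; subst p; move: (Hloop a); rewrite Hap.
have Hqb : q != b by apply/eqP => E; subst q; move: (Hloop b); rewrite Hbq.
have Hpb : p != b.
  apply/eqP => E; subst p; apply: (Hdab1 1) => //.
  by apply/walkbP; exists [:: b]; rewrite /= /uadj Hap.
have Hqa : q != a.
  apply/eqP => E; subst q; apply: (Hdab1 1) => //.
  by apply/walkbP; exists [:: b]; rewrite /= /uadj Hbq orbT.
have HV2 : 2 < #|V|.
  by apply/card_gt2P; exists a, b, p; split => //; split => //; rewrite eq_sym.
have Hpq : p != q.
  apply/eqP => E; subst q; apply: (Hdab1 2) => //.
  by apply/walkbP; exists [:: p; b]; rewrite /= /uadj Hap Hbq orbT.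
have Haq : ~~ A a q.
  apply/negP => H; have := Ha q; rewrite /uadj H => /(_ isT) E.
  by rewrite E eqxx in Hpq.
have Hbp : ~~ A b p.
  apply/negP => H; have := Hb p; rewrite /uadj H => /(_ isT) E.
  by rewrite E eqxx in Hpq.
have H1 := Heq _ _ _ Hap Hqa Haq.
have H2 := Heq _ _ _ Hbq Hpb Hbp.
have Hba : a != b by [].
have Hgt' : 2 < dist A b a by rewrite dist_sym.
set A2 := swap A a p q.
set A3 := swap A b q p.
have Hlt : cost A2 w a + cost A3 w b < cost A w a + cost A w b.
  rewrite /cost -!big_split /= (bigD1 a) //= [X in _ < X](bigD1 a) //=.
  rewrite !dist0.
  have Hd3 : dist A3 b a <= 2 by apply: pair2 => //; rewrite eq_sym.
  have Hwa := Hw a.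
  have HS : \sum_(i | i != a) (w i * dist A2 a i + w i * dist A3 b i) <=
            \sum_(i | i != a) (w i * dist A a i + w i * dist A b i).
    apply: leq_sum => y Hya.
    case: (eqVneq y b) => [->|Hyb].
      have Hd2 : dist A2 a b <= 2 by apply: pair2.
      rewrite !dist0 !muln0 !addn0 leq_mul2l; apply/orP; right; exact: ltnW (leq_ltn_trans Hd2 Hgt).
    have K1 : dist A2 a y <= dist A b y by apply: key.
    have K2 : dist A3 b y <= dist A a y by apply: key => //; rewrite eq_sym.
    by rewrite [X in _ <= X]addnC; apply: leq_add; rewrite leq_mul2l ?K1 ?K2 orbT.
  have Hm : w a * dist A3 b a < w a * dist A b a by rewrite ltn_pmul2l //; exact: leq_ltn_trans Hd3 Hgt'.
  rewrite !muln0 !add0n; exact: leq_trans (leq_add Hm HS).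
by move: Hlt; rewrite ltnNge => /negP; apply; exact: leq_add H1 H2.
Qed.
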